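(* In the process algebra $\mathcal{G}$ described in the context, suppose $C\|Z\mathbb{P}_v^{1}\approx C\|Z\mathbb{P}_v^{2}\mathbb{P}_u^{2}$ for some $\mathbb{P}_v^{1},\mathbb{P}_v^{2}$ (each a possibly empty sequential composition of constants from $\{V_k:k\in\mathcal{N}\}$) and some nonempty sequential composition $\mathbb{P}_u^{2}\neq\epsilon$ of constants from $\{U_k:k\in\mathcal{N}\}$. Then INST has a solution.
   Context: Process algebras: a triple $(\mathcal{C},\mathcal{A},\Delta)$ of finitely many constants, actions (including silent $\tau$) and rules $X\stackrel{\ell}{\longrightarrow}P$. Processes: $P::=\epsilon\mid X\mid PP'\mid P\|P'$, sequential composition associative, parallel composition associative and commutative, $\epsilon$ a unit for both. Semantics: rules of $\Delta$; if $P\stackrel{\ell}{\longrightarrow}P'$ then $PQ\stackrel{\ell}{\longrightarrow}P'Q$, $P\|Q\stackrel{\ell}{\longrightarrow}P'\|Q$, $Q\|P\stackrel{\ell}{\longrightarrow}Q\|P'$. $\Longrightarrow$ is the reflexive transitive closure of $\stackrel{\tau}{\longrightarrow}$; $\stackrel{\widehat{\ell}}{\Longrightarrow}$ is $\Longrightarrow\stackrel{\ell}{\longrightarrow}\Longrightarrow$ if $\ell\ne\tau$ and $\Longrightarrow$ if $\ell=\tau$. Weak bisimilarity $\approx$ is the largest relation $\mathcal{B}$ such that whenever $P\mathcal{B}Q$ and $P\stackrel{\ell}{\longrightarrow}P'$ there is $Q'$ with $Q\stackrel{\widehat{\ell}}{\Longrightarrow}Q'$, $P'\mathcal{B}Q'$,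 and symmetrically. The algebra $\mathcal{G}$: fix a finite alphabet $\Sigma$ with $|\Sigma|\ge2$ and a Post Correspondence instance $\mathrm{INST}=\{(u_1,v_1),\dots,(u_n,v_n)\}$ with $u_k,v_k\in\Sigma^{+}$; INST has a solution if there exist $m\ge1$ and $i_1,\dots,i_m\in\{1,\dots,n\}$ with $u_{i_1}\cdots u_{i_m}=v_{i_1}\cdots v_{i_m}$. Let $\mathcal{N}=\{1,\dots,n\}$. Actions: $\{\lambda_U,\lambda_V,\lambda_D,\lambda_I,\lambda_S,\lambda_Z\}\cup\mathcal{N}\cup\Sigma\cup\{\tau\}$. Constants: $X,Y,Z,I,S,C,C',D,G,G',G_u,G_v,G_v'$, $U_k,V_k$ ($k\in\mathcal{N}$), and $W(\omega,k),W(\omega,0)$ for $k\in\mathcal{N}$ and $\omega$ a (possibly empty) suffix of $u_k$ or of $v_k$; $\mathcal{W}$ is the set of these $W$-constants. Rules (with $k$ ranging over $\mathcal{N}$, $a$ over $\Sigma$, $W$ over $\mathcal{W}$): $X\stackrel{\lambda_U}{\longrightarrow}D\|G_v$, $X\stackrel{\tau}{\longrightarrow}D$, $Y\stackrel{\tau}{\longrightarrow}D$, $D\stackrel{\tau}{\longrightarrow}D\|G_u$, $D\stackrel{\lambda_D}{\longrightarrow}C$; $G_u\stackrel{\tau}{\longrightarrow}G_uU_k$, $G_u\stackrel{\lambda_U}{\longrightarrow}G_vU_k$, $G_u\stackrel{\tau}{\longrightarrow}G_v'$, $G_v'\stackrel{\tau}{\longrightarrow}G_v'V_k$, $G_v'\stackrel{\tau}{\longrightarrow}Z$;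 $G_v\stackrel{\tau}{\longrightarrow}G_vV_k$, $G_v\stackrel{\tau}{\longrightarrow}\epsilon$, $G_v\stackrel{\lambda_V}{\longrightarrow}Z$, $Z\stackrel{\tau}{\longrightarrow}\epsilon$, $Z\stackrel{\lambda_Z}{\longrightarrow}\epsilon$; $C\stackrel{\lambda_I}{\longrightarrow}I$, $C\stackrel{\lambda_S}{\longrightarrow}S$, $C\stackrel{\tau}{\longrightarrow}C\|G$, $C\stackrel{\tau}{\longrightarrow}C\|G_v$; $G\stackrel{\tau}{\longrightarrow}GU_k$, $G\stackrel{\tau}{\longrightarrow}GV_k$, $G\stackrel{\tau}{\longrightarrow}\epsilon$; $I\stackrel{\lambda_I}{\longrightarrow}C'$, $I\stackrel{k}{\longrightarrow}I$, $S\stackrel{\lambda_S}{\longrightarrow}C'$, $S\stackrel{a}{\longrightarrow}S$, $C'\stackrel{\tau}{\longrightarrow}C'\|G'$, $C'\stackrel{\tau}{\longrightarrow}\epsilon$; $G'\stackrel{\tau}{\longrightarrow}G'U_k$, $G'\stackrel{\tau}{\longrightarrow}G'V_k$, $G'\stackrel{\tau}{\longrightarrow}G'W$, $G'\stackrel{\tau}{\longrightarrow}G_v$, $G'\stackrel{\tau}{\longrightarrow}Z$; $U_k\stackrel{\tau}{\longrightarrow}W(u_k,k)$, $V_k\stackrel{\tau}{\longrightarrow}W(v_k,k)$; $W(a\omega,k)\stackrel{a}{\longrightarrow}W(\omega,k)$, $W(a\omega,0)\stackrel{a}{\longrightarrow}W(\omega,0)$, $W(\omega,k)\stackrel{k}{\longrightarrow}W(\omega,0)$,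 $W(a\omega,k)\stackrel{\tau}{\longrightarrow}W(\omega,k)$, $W(a\omega,0)\stackrel{\tau}{\longrightarrow}W(\omega,0)$, $W(\omega,k)\stackrel{\tau}{\longrightarrow}W(\omega,0)$, $W(\epsilon,0)\stackrel{\tau}{\longrightarrow}\epsilon$. *)

(* Defs.v *)
From mathcomp Require Import all_boot.
Set Implicit Arguments. Unset Strict Implicit. Unset Printing Implicit Defensive.

Section ProcessAlgebraG.
Variable Sigma : finType.
(* INST = [:: (u_1,v_1); ...; (u_n,v_n)]; index k in N = {1..n} refers to the
   (k-1)-th entry of the list. *)
Variable inst : seq (seq Sigma * seq Sigma).

Definition inN (k : nat) : bool := (0 < k) && (k <= size inst).
Definition uw (k : nat) : seq Sigma := (nth ([::], [::]) inst k.-1).1.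
Definition vw (k : nat) : seq Sigma := (nth ([::], [::]) inst k.-1).2.

Definition pcp_solution : Prop :=
  exists ix : seq nat, ix != [::] /\ all inN ix /\
    flatten (map uw ix) = flatten (map vw ix).

(* Constants. [cW w k] is W(w,k); only those in the set 𝒲 are used by the rules. *)
Inductive const : Type :=
| cX | cY | cZ | cI | cS | cC | cC' | cD | cG | cG' | cGu | cGv | cGv'
| cU (k : nat) | cV (k : nat) | cW (w : seq Sigma) (k : nat).

Definition validW (w : seq Sigma) (k : nat) : Prop :=
  if k == 0 then exists j, inN j /\ (suffix w (uw j) || suffix w (vw j))
  else inN k /\ (suffix w (uw k) || suffix w (vw k)).

Inductive act : Type :=
| lU | lV | lD | lI | lS | lZ | aIdx (k : nat) | aSym (a : Sigma) | tau.

Inductive proc : Type :=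
| Eps | Con (c : const) | Seq (p q : proc) | Par (p q : proc).

Inductive scong : proc -> proc -> Prop :=
| sc_refl p : scong p p
| sc_sym p q : scong p q -> scong q p
| sc_trans p q r : scong p q -> scong q r -> scong p r
| sc_seq p p' q q' : scong p p' -> scong q q' -> scong (Seq p q) (Seq p' q')
| sc_par p p' q q' : scong p p' -> scong q q' -> scong (Par p q) (Par p' q')
| sc_seqA p q r : scong (Seq (Seq p q) r) (Seq p (Seq q r))
| sc_seq_epsl p : scong (Seq Eps p) p
| sc_seq_epsr p : scong (Seq p Eps) p
| sc_parA p q r : scong (Par (Par p q) r) (Par p (Par q r))
| sc_parC p q : scong (Par p q) (Par q p)
| sc_par_eps p : scong (Par Eps p) p.

Inductive delta : const -> act -> proc -> Prop :=
| dX1 : delta cX lU (Par (Con cD) (Con cGv))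
| dX2 : delta cX tau (Con cD)
| dY : delta cY tau (Con cD)
| dD1 : delta cD tau (Par (Con cD) (Con cGu))
| dD2 : delta cD lD (Con cC)
| dGu1 k : inN k -> delta cGu tau (Seq (Con cGu) (Con (cU k)))
| dGu2 k : inN k -> delta cGu lU (Seq (Con cGv) (Con (cU k)))
| dGu3 : delta cGu tau (Con cGv')
| dGv'1 k : inN k -> delta cGv' tau (Seq (Con cGv') (Con (cV k)))
| dGv'2 : delta cGv' tau (Con cZ)
| dGv1 k : inN k -> delta cGv tau (Seq (Con cGv) (Con (cV k)))
| dGv2 : delta cGv tau Eps
| dGv3 : delta cGv lV (Con cZ)
| dZ1 : delta cZ tau Eps
| dZ2 : delta cZ lZ Eps
| dC1 : delta cC lI (Con cI)
| dC2 : delta cC lS (Con cS)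
| dC3 : delta cC tau (Par (Con cC) (Con cG))
| dC4 : delta cC tau (Par (Con cC) (Con cGv))
| dG1 k : inN k -> delta cG tau (Seq (Con cG) (Con (cU k)))
| dG2 k : inN k -> delta cG tau (Seq (Con cG) (Con (cV k)))
| dG3 : delta cG tau Eps
| dI1 : delta cI lI (Con cC')
| dI2 k : inN k -> delta cI (aIdx k) (Con cI)
| dS1 : delta cS lS (Con cC')
| dS2 a : delta cS (aSym a) (Con cS)
| dC'1 : delta cC' tau (Par (Con cC') (Con cG'))
| dC'2 : delta cC' tau Eps
| dG'1 k : inN k -> delta cG' tau (Seq (Con cG') (Con (cU k)))
| dG'2 k : inN k -> delta cG' tau (Seq (Con cG') (Con (cV k)))
| dG'3 w k : validW w k -> delta cG' tau (Seq (Con cG') (Con (cW w k)))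
| dG'4 : delta cG' tau (Con cGv)
| dG'5 : delta cG' tau (Con cZ)
| dU k : inN k -> delta (cU k) tau (Con (cW (uw k) k))
| dV k : inN k -> delta (cV k) tau (Con (cW (vw k) k))
| dWa a w k : validW (a :: w) k -> delta (cW (a :: w) k) (aSym a) (Con (cW w k))
| dWk w k : inN k -> validW w k -> delta (cW w k) (aIdx k) (Con (cW w 0))
| dWt a w k : validW (a :: w) k -> delta (cW (a :: w) k) tau (Con (cW w k))
| dWkt w k : inN k -> validW w k -> delta (cW w k) tau (Con (cW w 0))
| dWe : validW [::] 0 -> delta (cW [::] 0) tau Eps.

Inductive step : proc -> act -> proc -> Prop :=
| st_rule c l p : delta c l p -> step (Con c) l p
| st_seq p l p' q : step p l p' -> step (Seq p q) l (Seq p' q)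
| st_parl p l p' q : step p l p' -> step (Par p q) l (Par p' q)
| st_parr p l p' q : step p l p' -> step (Par q p) l (Par q p')
| st_cong p p1 l p2 p' :
    scong p p1 -> step p1 l p2 -> scong p2 p' -> step p l p'.

Inductive taus : proc -> proc -> Prop :=
| taus_refl p : taus p p
| taus_step p q r : step p tau q -> taus q r -> taus p r.

Definition wstep (p : proc) (l : act) (q : proc) : Prop :=
  match l with
  | tau => taus p q
  | _ => exists p1 p2, taus p p1 /\ step p1 l p2 /\ taus p2 q
  end.

Definition weak_bisimulation (B : proc -> proc -> Prop) : Prop :=
  forall p q, B p q ->
    (forall l p', step p l p' -> exists2 q', wstep q l q' & B p' q') /\
    (forall l q', step q l q' -> exists2 p', wstep p l p' & B p' q').

Definition wbisim (p q : proc) : Prop :=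
  exists B, weak_bisimulation B /\ B p q.

Definition seqs (ps : seq proc) : proc := foldr Seq Eps ps.
Definition PV (ks : seq nat) : proc := seqs (map (fun k => Con (cV k)) ks).
Definition PU (ks : seq nat) : proc := seqs (map (fun k => Con (cU k)) ks).

End ProcessAlgebraG.

(* Main.v *)
From HB Require Import structures.
Require Import Defs.
From mathcomp Require Import all_boot.
Set Implicit Arguments. Unset Strict Implicit. Unset Printing Implicit Defensive.

Section Dev.
Variable Sigma : finType.
Variable inst : seq (seq Sigma * seq Sigma).
Local Notation const := (const Sigma).
Local Notation proc := (proc Sigma).
Arguments cX {Sigma}. Arguments cY {Sigma}. Arguments cZ {Sigma}. Arguments cI {Sigma}. Arguments cS {Sigma}. Arguments cC {Sigma}. Arguments cC' {Sigma}. Arguments cD {Sigma}. Arguments cG {Sigma}. Arguments cG' {Sigma}. Arguments cGu {Sigma}. Arguments cGv {Sigma}. Arguments cGv' {Sigma}. Arguments cU {Sigma}. Arguments cV {Sigma}. Arguments cW {Sigma}.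
Arguments Eps {Sigma}. Arguments lU {Sigma}. Arguments lV {Sigma}. Arguments lD {Sigma}. Arguments lI {Sigma}. Arguments lS {Sigma}. Arguments lZ {Sigma}. Arguments aIdx {Sigma}. Arguments aSym {Sigma}. Arguments tau {Sigma}.

Definition enc (c : const) : nat * (seq Sigma * nat) :=
  match c with
  | cX => (0, ([::], 0)) | cY => (1, ([::], 0)) | cZ => (2, ([::], 0))
  | cI => (3, ([::], 0)) | cS => (4, ([::], 0)) | cC => (5, ([::], 0))
  | cC' => (6, ([::], 0)) | cD => (7, ([::], 0)) | cG => (8, ([::], 0))
  | cG' => (9, ([::], 0)) | cGu => (10, ([::], 0)) | cGv => (11, ([::], 0))
  | cGv' => (12, ([::], 0)) | cU k => (13, ([::], k)) | cV k => (14, ([::], k))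
  | cW w k => (15, (w, k)) end.
Definition dec (x : nat * (seq Sigma * nat)) : option const :=
  match x with
  | (0, _) => Some cX | (1, _) => Some cY | (2, _) => Some cZ
  | (3, _) => Some cI | (4, _) => Some cS | (5, _) => Some cC
  | (6, _) => Some cC' | (7, _) => Some cD | (8, _) => Some cG
  | (9, _) => Some cG' | (10, _) => Some cGu | (11, _) => Some cGv
  | (12, _) => Some cGv' | (13, (_, k)) => Some (cU k) | (14, (_, k)) => Some (cV k)
  | (15, (w, k)) => Some (cW w k) | _ => None end.
Lemma encK : pcancel enc dec. Proof. by case. Qed.
HB.instance Definition _ := Equality.copy const (pcan_type encK).


Local Notation DD := (seq (seq const)).

Definition oseq (a b : option DD) : option DD :=
  match a, b with
  | Some [::], _ => b
  | _, Some [::] => a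
  | Some [:: t1], Some [:: t2] => Some [:: t1 ++ t2]
  | _, _ => None end.
Definition opar (a b : option DD) : option DD :=
  match a, b with Some x, Some y => Some (x ++ y) | _, _ => None end.
Definition oeq (a b : option DD) : Prop :=
  match a, b with Some x, Some y => perm_eq x y | None, None => True | _, _ => False end.

Fixpoint den (p : proc) : option DD :=
  match p with
  | Eps => Some [::]
  | Con c => Some [:: [:: c]]
  | Seq p q => oseq (den p) (den q)
  | Par p q => opar (den p) (den q) end.

Lemma oeq_refl a : oeq a a. Proof. by case: a => //= x; exact: perm_refl. Qed.
Lemma oeq_sym a b : oeq a b -> oeq b a.
Proof. by case: a; case: b => //= x y; rewrite perm_sym. Qed.
Lemma oeq_trans a b c : oeq a b -> oeq b c -> oeq a c.
Proof. by case: a => [x|]; case: b => [y|]; case: c => [z|] //= h1 h2; apply: perm_trans h1 h2. Qed.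

Lemma perm_shape (x y : DD) : perm_eq x y ->
  (x = [::] /\ y = [::]) \/ (exists t, x = [:: t] /\ y = [:: t]) \/ (1 < size x /\ 1 < size y).
Proof.
move=> h; have hs := perm_size h.
case: x h hs => [|a [|b x]]; case: y => [|c [|d y]] //= h hs; try by [left|right;right].
right; left; exists a; split => //; congr [:: _].
by have := perm_mem h a; rewrite !inE eqxx => /esym/eqP.
Qed.

Lemma oseq_r0 a : oseq a (Some [::]) = a.
Proof. by case: a => // [[|t [|t' x]]]. Qed.

Lemma oseqA a b c : oseq (oseq a b) c = oseq a (oseq b c).
Proof.
case: a => [[|a1 [|a2 a]]|]; case: b => [[|b1 [|b2 b]]|]; case: c => [[|c1 [|c2 c]]|] //=;
  by rewrite ?catA.
Qed.

Lemma oparA a b c : opar (opar a b) c = opar a (opar b c).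
Proof. by case: a; case: b; case: c => //= *; rewrite catA. Qed.

Lemma oseq_oeq a a' b b' : oeq a a' -> oeq b b' -> oeq (oseq a b) (oseq a' b').
Proof.
case: a => [x|]; case: a' => [x'|] //=; case: b => [y|]; case: b' => [y'|] //= hx hy.
- case: (perm_shape hx) => [[-> ->]|[[t [-> ->]]|[h1 h2]]];
  case: (perm_shape hy) => [[-> ->]|[[s [-> ->]]|[g1 g2]]] //=;
  try (case: x h1 hx => [|? [|? ?]] // _ hx; case: x' h2 hx => [|? [|? ?]] // _ hx);
  try (case: y g1 hy => [|? [|? ?]] // _ hy; case: y' g2 hy => [|? [|? ?]] // _ hy);
  rewrite /= //; exact: perm_refl.
- by case: (perm_shape hx) => [[-> ->]|[[t [-> ->]]|[h1 h2]]] //=;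
     case: x h1 hx => [|? [|? ?]] //; case: x' h2 => [|? [|? ?]].
- by case: (perm_shape hy) => [[-> ->]|[[t [-> ->]]|[h1 h2]]] //=;
     case: y h1 hy => [|? [|? ?]] //; case: y' h2 => [|? [|? ?]].
Qed.

Lemma opar_oeq a a' b b' : oeq a a' -> oeq b b' -> oeq (opar a b) (opar a' b').
Proof.
case: a => [x|]; case: a' => [x'|] //=; case: b => [y|]; case: b' => [y'|] //= hx hy.
by rewrite (perm_cat hx hy).
Qed.

Lemma scong_den p q : scong p q -> oeq (den p) (den q).
Proof.
elim => {p q} /=.
- move=> p; exact: oeq_refl.
- by move=> p q _; apply: oeq_sym.
- by move=> p q r _ h1 _ h2; apply: oeq_trans h1 h2.
- by move=> p p' q q' _ h1 _ h2; apply: oseq_oeq.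
- by move=> p p' q q' _ h1 _ h2; apply: opar_oeq.
- move=> p q r; rewrite oseqA; exact: oeq_refl.
- move=> p; exact: oeq_refl.
- move=> p; rewrite oseq_r0; exact: oeq_refl.
- move=> p q r; rewrite oparA; exact: oeq_refl.
- move=> p q; case: (den p) => [x|]; case: (den q) => [y|] //=; by rewrite perm_catC.
- move=> p; case: (den p) => //= x; exact: perm_refl.
Qed.

Definition thrl (t : seq const) : DD := if t is [::] then [::] else [:: t].
Definition thr (t : seq const) : option DD := Some (thrl t).

Lemma oseq_thr a b : oseq (thr a) (thr b) = thr (a ++ b).
Proof. by case: a => [|x a]; case: b => [|y b] //=; rewrite cats0. Qed.

Lemma opar_r0 a : oeq (opar a (Some [::])) a.
Proof. by case: a => //= x; rewrite cats0 perm_refl. Qed.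

Lemma den_ne p D : den p = Some D -> all (fun t => 0 < size t) D.
Proof.
elim: p D => [|c|p IHp q IHq|p IHp q IHq] D /=.
- by case=> <-.
- by case=> <-.
- case: (den p) IHp => [x|] IHp; last by case: (den q) => // [[|? [|? ?]]].
  case: (den q) IHq => [y|] IHq; last by case: x {IHp} => [|? [|? ?]].
  have := IHp _ erefl; have := IHq _ erefl.
  case: x {IHp} => [|a [|b x]]; case: y {IHq} => [|c [|d y]] //= hy hx;
  case=> <-; rewrite //= ?size_cat ?addn_gt0 //; by move: hx => /andP[-> _].
- case: (den p) IHp => [x|] IHp; case: (den q) IHq => [y|] IHq // [<-].
  by rewrite all_cat IHp // IHq.
Qed.

Lemma step_den p l p' : step inst p l p' -> forall D, den p = Some D ->
  exists c t D0 r, [/\ perm_eq D ((c :: t) :: D0), delta inst c l r &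
    oeq (den p') (opar (oseq (den r) (thr t)) (Some D0))].
Proof.
elim => {p l p'}.
- move=> c l r h D /= [<-]; exists c, [::], [::], r; split => //.
  rewrite oseq_r0; apply: oeq_sym; exact: opar_r0.
- move=> p l p' q hs IH D /=.
  case Ep: (den p) => [x|]; last by case: (den q) => // [[|? [|? ?]]].
  case Eq: (den q) => [y|]; last by case: x {Ep} => [|? [|? ?]].
  have yne := den_ne Eq.
  case: x Ep => [|t1 [|t1' x]] Ep; case: y Eq yne => [|t2 [|t2' y]] Eq yne //= [<-].
  + by have [c [t [D0 [r [/perm_size]]]]] := IH _ Ep.
  + by have [c [t [D0 [r [/perm_size]]]]] := IH _ Ep.
  + by have [c [t [D0 [r [/perm_size]]]]] := IH _ Ep.
  + have [c [t [D0 [r [hp hd ho]]]]] := IH _ Ep.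
    exists c, t, D0, r; split => //; by rewrite oseq_r0.
  + have [c [t [D0 [r [hp hd ho]]]]] := IH _ Ep.
    case: (perm_shape hp) => [[//]|[[t0 [[e1] [e2 e3]]]|[//]]].
    subst; exists c, (t ++ t2), [::], r; split => //.
    apply: oeq_trans (oeq_sym (opar_r0 _)).
    have h2 : Some [:: t2] = thr t2 by case: t2 {Eq} yne.
    rewrite h2 -oseq_thr -oseqA; apply: oseq_oeq (oeq_refl _).
    exact: oeq_trans ho (opar_r0 _).
  + have [c [t [D0 [r [hp hd ho]]]]] := IH _ Ep.
    exists c, t, D0, r; split => //; by rewrite oseq_r0.
- move=> p l p' q hs IH D /=.
  case Ep: (den p) => [x|]; case Eq: (den q) => [y|] // [<-].
  have [c [t [D0 [r [hp hd ho]]]]] := IH _ Ep.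
  exists c, t, (D0 ++ y), r; split => //=; first by rewrite -cat_cons perm_cat2r.
  apply: oeq_trans (opar_oeq ho (oeq_refl _)) _.
  rewrite oparA; exact: oeq_refl.
- move=> p l p' q hs IH D /=.
  case Ep: (den p) => [x|]; case Eq: (den q) => [y|] // [<-].
  have [c [t [D0 [r [hp hd ho]]]]] := IH _ Ep.
  exists c, t, (y ++ D0), r; split => //=.
    apply: perm_trans (_ : perm_eq _ (y ++ (c :: t) :: D0)) _; first by rewrite perm_cat2l.
    by rewrite -cat1s perm_catCA.
  have h := opar_oeq (oeq_refl (Some y)) ho.
  apply: (oeq_trans h).
  case: (oseq _ _) => //= z; by rewrite perm_catCA.
- move=> p p1 l p2 p' hc hs IH hc2 D hD.
  have := scong_den hc; rewrite hD; case E1: (den p1) => [D1|] //= hp1.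
  have [c [t [D0 [r [hp hd ho]]]]] := IH _ E1.
  exists c, t, D0, r; split => //; first exact: perm_trans hp1 hp.
  exact: oeq_trans (oeq_sym (scong_den hc2)) ho.
Qed.

Definition tp (t : seq const) : proc := foldr (fun c p => Seq (Con c) p) Eps t.
Definition canon (D : DD) : proc := foldr (fun t p => Par (tp t) p) Eps D.

Lemma den_tp t : den (tp t) = thr t.
Proof. elim: t => //= c t ->; exact: (oseq_thr [:: c] t). Qed.

Lemma tp_cat a b : scong (Seq (tp a) (tp b)) (tp (a ++ b)).
Proof.
elim: a => [|c a IH] /=; first exact: sc_seq_epsl.
apply: sc_trans (sc_seqA _ _ _) _; apply: sc_seq => //; exact: sc_refl.
Qed.

Lemma canon_cat A B : scong (canon (A ++ B)) (Par (canon A) (canon B)).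
Proof.
elim: A => [|a A IH] /=; first exact: sc_sym (sc_par_eps _).
apply: sc_trans (sc_par (sc_refl _) IH) _; exact: sc_sym (sc_parA _ _ _).
Qed.

Lemma canon1 t : scong (canon [:: t]) (tp t).
Proof. rewrite /=; apply: sc_trans (sc_parC _ _) _; exact: sc_par_eps. Qed.

Lemma den_complete p D : den p = Some D -> scong p (canon D).
Proof.
elim: p D => [|c|p IHp q IHq|p IHp q IHq] D /=.
- case=> <-; exact: sc_refl.
- case=> <-; apply: sc_sym; apply: sc_trans (canon1 _) _; exact: sc_seq_epsr.
- case Ep: (den p) => [x|]; last by case: (den q) => // [[|? [|? ?]]].
  case Eq: (den q) => [y|]; last by case: x {Ep} => [|? [|? ?]].
  have hp := IHp _ Ep; have hq := IHq _ Eq.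
  case: x Ep hp => [|t1 [|t1' x]] Ep hp; case: y Eq hq => [|t2 [|t2' y]] Eq hq //= [<-].
  + apply: sc_trans (sc_seq hp (sc_refl _)) _; exact: sc_trans (sc_seq_epsl _) hq.
  + apply: sc_trans (sc_seq hp (sc_refl _)) _; exact: sc_trans (sc_seq_epsl _) hq.
  + apply: sc_trans (sc_seq hp (sc_refl _)) _; exact: sc_trans (sc_seq_epsl _) hq.
  + apply: sc_trans (sc_seq (sc_refl _) hq) _; exact: sc_trans (sc_seq_epsr _) hp.
  + apply: sc_trans (sc_seq (sc_trans hp (canon1 _)) (sc_trans hq (canon1 _))) _.
    apply: sc_trans (tp_cat _ _) _; apply: sc_sym; exact: canon1.
  + apply: sc_trans (sc_seq (sc_refl _) hq) _; exact: sc_trans (sc_seq_epsr _) hp.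
- case Ep: (den p) => [x|]; case Eq: (den q) => [y|] // [<-].
  apply: sc_trans (sc_par (IHp _ Ep) (IHq _ Eq)) _; apply: sc_sym; exact: canon_cat.
Qed.

Lemma par_swap (x y z : proc) : scong (Par x (Par y z)) (Par y (Par x z)).
Proof.
apply: sc_trans (sc_sym (sc_parA _ _ _)) _.
apply: sc_trans (sc_par (sc_parC _ _) (sc_refl _)) _; exact: sc_parA.
Qed.

Lemma canon_perm A B : perm_eq A B -> scong (canon A) (canon B).
Proof.
elim: A B => [|a A IH] B hp.
  by case: B hp => [|b B] /perm_size //= _; exact: sc_refl.
have hin : a \in B by rewrite -(perm_mem hp) mem_head.
move: hp; case/splitPr: hin => B1 B2 hp.
have hp' : perm_eq A (B1 ++ B2).
  by rewrite -(perm_cons a); apply: perm_trans hp _; rewrite -cat1s perm_catCA.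
apply: sc_trans (sc_par (sc_refl _) (sc_trans (IH _ hp') (canon_cat _ _))) _.
apply: sc_trans (par_swap _ _ _) _; apply: sc_sym.
apply: sc_trans (canon_cat _ _) _; exact: sc_refl.
Qed.

Inductive wr : proc -> seq (act Sigma) -> proc -> Prop :=
| wr_nil p : wr p [::] p
| wr_tau p q t r : step inst p tau q -> wr q t r -> wr p t r
| wr_vis p q l t r : l <> tau -> step inst p l q -> wr q t r -> wr p (l :: t) r.

Definition wtr p t := exists q, wr p t q.

Lemma wr_cat p t q t' r : wr p t q -> wr q t' r -> wr p (t ++ t') r.
Proof.
elim => {p t q} //= [p q t r' hs _ IH h|p q l t r' hl hs _ IH h].
- exact: wr_tau hs (IH h).
- exact: wr_vis hl hs (IH h).
Qed.

Lemma wr_ctx (f : proc -> proc) :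
  (forall a l b, step inst a l b -> step inst (f a) l (f b)) ->
  forall p t q, wr p t q -> wr (f p) t (f q).
Proof.
move=> hf p t q; elim => {p t q}.
- move=> p; exact: wr_nil.
- move=> p q t r hs _ IH; exact: wr_tau (hf _ _ _ hs) IH.
- move=> p q l t r hl hs _ IH; exact: wr_vis hl (hf _ _ _ hs) IH.
Qed.

Lemma wtr_scong p p' t : scong p p' -> wtr p' t -> wtr p t.
Proof.
move=> hc [q h]; case: h hc.
- move=> p0 _; exists p; exact: wr_nil.
- move=> p0 q0 t0 r hs hw hc; exists r; apply: wr_tau _ hw.
  exact: st_cong hc hs (sc_refl _).
- move=> p0 q0 l t0 r hl hs hw hc; exists r; apply: wr_vis hl _ hw.
  exact: st_cong hc hs (sc_refl _).
Qed.

Lemma taus_wr p q t r : taus inst p q -> wr q t r -> wr p t r.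
Proof. elim => // p0 q0 r0 hs _ IH h; exact: wr_tau hs (IH h). Qed.

Lemma wstep_wr p l p' : l <> tau -> wstep inst p l p' -> wr p [:: l] p'.
Proof.
case: l => //= *; match goal with H : exists _ _, _ |- _ => case: H => [p1 [p2 [h1 [h2 h3]]]] end;
  (apply: taus_wr h1 _; apply: wr_vis h2 _ => //; elim: h3 => [x|x y z hs _ IH];
   [exact: wr_nil | exact: wr_tau hs IH]).
Qed.

Lemma taus_wr' p q : taus inst p q -> wr p [::] q.
Proof. move=> h; apply: taus_wr h _; exact: wr_nil. Qed.

Lemma bisim_transfer (B : proc -> proc -> Prop) : weak_bisimulation inst B ->
  (forall q t q', wr q t q' -> forall p, B p q -> wtr p t) /\
  (forall p t p', wr p t p' -> forall q, B p q -> wtr q t).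
Proof.
move=> hB; split.
- move=> q t q'; elim => {q t q'}.
  + move=> q p _; exists p; exact: wr_nil.
  + move=> q q1 t r hs _ IH p hpq.
    have [_ h2] := hB _ _ hpq; have [p1 hw hb] := h2 _ _ hs.
    have [r' hr] := IH _ hb; exists r'; exact: taus_wr hw hr.
  + move=> q q1 l t r hl hs _ IH p hpq.
    have [_ h2] := hB _ _ hpq; have [p1 hw hb] := h2 _ _ hs.
    have [r' hr] := IH _ hb; exists r'.
    exact: (wr_cat (wstep_wr hl hw) hr).
- move=> p t p'; elim => {p t p'}.
  + move=> p q _; exists q; exact: wr_nil.
  + move=> p p1 t r hs _ IH q hpq.
    have [h1 _] := hB _ _ hpq; have [q1 hw hb] := h1 _ _ hs.
    have [r' hr] := IH _ hb; exists r'; exact: taus_wr hw hr.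
  + move=> p p1 l t r hl hs _ IH q hpq.
    have [h1 _] := hB _ _ hpq; have [q1 hw hb] := h1 _ _ hs.
    have [r' hr] := IH _ hb; exists r'.
    exact: (wr_cat (wstep_wr hl hw) hr).
Qed.

Lemma perm2 (x y : seq const) (A B : DD) : perm_eq (x :: A) (y :: B) ->
  (x = y /\ perm_eq A B) \/ exists C, perm_eq A (y :: C) /\ perm_eq B (x :: C).
Proof.
move=> h; case: (eqVneq x y) => [exy|nxy].
  by left; split => //; move: h; rewrite exy perm_cons.
right; have hin : y \in A.
  by move: (perm_mem h y); rewrite !inE eqxx eq_sym (negbTE nxy) /= => ->.
move: h; case/splitPr: hin => A1 A2 h; exists (A1 ++ A2); split.
  by rewrite -cat1s perm_catCA.
have h' : perm_eq (y :: x :: A1 ++ A2) (y :: B).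
  apply: (perm_trans _ h); have := perm_catCA (x :: A1) [:: y] A2.
  by move=> /(_ (x :: A1 ++ y :: A2)) /= <-; rewrite perm_refl.
by rewrite perm_cons perm_sym in h'.
Qed.

Definition ztb (c : const) : bool :=
  match c with cZ | cU _ | cV _ | cW _ _ => true | _ => false end.

Lemma L1 t : oseq (den Eps) (thr t) = thr t. Proof. by []. Qed.
Lemma L2 c t : oseq (den (Con c)) (thr t) = thr (c :: t). Proof. exact: (oseq_thr [:: c] t). Qed.
Lemma L3 a b t : oseq (den (Seq (Con a) (Con b))) (thr t) = thr [:: a, b & t].
Proof. exact: (oseq_thr [:: a; b] t). Qed.
Lemma all_thrl (g : seq const -> bool) t : g t -> all g (thrl t).
Proof. by case: t => //= ? ? ->. Qed.

Section Bound.
Variables (X : eqType) (cM : const) (pot : const -> seq X) (okl : act Sigma -> bool)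
  (em : act Sigma -> option X).
Hypothesis oktau : okl tau.
Hypothesis emtau : em tau = None.
Hypothesis hM : forall l r, delta inst cM l r -> okl l -> False.
Definition tpot (u : seq const) := flatten (map pot u).
Definition Tpot (T : DD) := flatten (map tpot T).
Definition emc l (s s' : seq X) := if em l is Some a then subseq (a :: s') s else subseq s' s.
Hypothesis hloc : forall c t l r, ztb c -> all ztb t -> delta inst c l r -> okl l ->
  exists T', [/\ oseq (den r) (thr t) = Some T', size T' <= 1, all (all ztb) T' &
                 emc l (tpot (c :: t)) (Tpot T')].
Definition InvB D T := [/\ perm_eq D ([:: cM] :: T), size T <= 1 & all (all ztb) T].

Lemma stepB p l p' D T : step inst p l p' -> okl l -> den p = Some D -> InvB D T ->
  exists D' T', [/\ den p' = Some D', InvB D' T' & emc l (Tpot T) (Tpot T')].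
Proof.
move=> hs hl hD [hp hsz hz].
have [c [t [D0 [r [hp2 hd ho]]]]] := step_den hs hD.
have hp' : perm_eq ([:: cM] :: T) D by rewrite perm_sym.
case/perm2: (perm_trans hp' hp2) => [[[ec et] _]|[C [h1 h2]]].
  by subst c; case: (hM hd hl).
have hC : C = [::].
  by move: (perm_size h1) hsz => /= ->; case: C {h1 h2}.
subst C; case: (perm_shape h1) => [[//]|[[t0 [eT e0]]|[//]]].
case: e0 => e0; subst T t0.
move: hz => /= /andP[/andP [hzc hzt] _].
have [T' [hr hs' hz' he]] := hloc hzc hzt hd hl.
move: ho; rewrite hr; case E: (den p') => [D'|] //= hpD'.
exists D', T'; split => //.
  split => //; apply: perm_trans hpD' _.
  by rewrite perm_sym -cat1s perm_catC perm_cat2l perm_sym.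
by rewrite /Tpot /= cats0.
Qed.

Lemma boundB p t q : wr p t q -> all okl t -> forall D T, den p = Some D -> InvB D T ->
  subseq (pmap em t) (Tpot T).
Proof.
elim => {p t q}.
- by move=> p _ D T _ _; exact: sub0seq.
- move=> p q t r hs _ IH hok D T hD hI.
  have [D' [T' [hD' hI' he]]] := stepB hs oktau hD hI.
  move: he; rewrite /emc emtau => he.
  exact: subseq_trans (IH hok _ _ hD' hI') he.
- move=> p q l t r hl hs _ IH /= /andP[hokl hok] D T hD hI.
  have [D' [T' [hD' hI' he]]] := stepB hs hokl hD hI.
  have := IH hok _ _ hD' hI'.
  move: he; rewrite /emc; case E: (em l) => [a|] he /= hsub.
    by apply: subseq_trans he; rewrite /= eqxx.
  exact: subseq_trans hsub he.
Qed.
End Bound.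

Definition potL (c : const) : seq Sigma :=
  match c with cU k => uw inst k | cV k => vw inst k | cW w _ => w | _ => [::] end.
Definition oklI (l : act Sigma) : bool :=
  match l with tau | lZ | aSym _ => true | _ => false end.
Definition emI (l : act Sigma) : option Sigma := if l is aSym a then Some a else None.

Lemma Tpot_thrl (X : eqType) (pot : const -> seq X) t : Tpot pot (thrl t) = tpot pot t.
Proof. by case: t => // x t; rewrite /Tpot /= cats0. Qed.

Lemma tpot_cons (X : eqType) (pot : const -> seq X) c t : tpot pot (c :: t) = pot c ++ tpot pot t.
Proof. by []. Qed.

Lemma emcN (X : eqType) (em : act Sigma -> option X) l s s' : em l = None -> emc em l s s' = subseq s' s.
Proof. by rewrite /emc => ->. Qed.
Lemma potLW w k : potL (cW w k) = w. Proof. by []. Qed.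

Lemma size_thrl t : size (thrl t) <= 1. Proof. by case: t. Qed.

Lemma hMI l r : delta inst cI l r -> oklI l -> False.
Proof. by move=> h; inversion h. Qed.

Lemma hlocI c t l r : ztb c -> all ztb t -> delta inst c l r -> oklI l ->
  exists T', [/\ oseq (den r) (thr t) = Some T', size T' <= 1, all (all ztb) T' &
                 emc emI l (tpot potL (c :: t)) (Tpot potL T')].
Proof.
move=> hc ht hd; case: hd hc => //; intros; rewrite ?L1 ?L2 ?L3;
  (eexists; split; [reflexivity | exact: size_thrl | |]).
all: try (apply: all_thrl; exact: ht).
all: try by rewrite /= ht.
all: try by rewrite Tpot_thrl emcN // !tpot_cons !potLW cat_cons subseq_cons.
all: rewrite Tpot_thrl /emc !tpot_cons /= -/(tpot potL t) ?eqxx ?subseq_refl //.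
Qed.

Definition potS (c : const) : seq nat :=
  match c with cU k | cV k => [:: k] | cW _ k => if k is 0 then [::] else [:: k] | _ => [::] end.
Definition oklS (l : act Sigma) : bool :=
  match l with tau | lZ | aIdx _ => true | _ => false end.
Definition emS (l : act Sigma) : option nat := if l is aIdx k then Some k else None.

Lemma potSW0 w : potS (cW w 0) = [::]. Proof. by []. Qed.
Lemma potSWS w k : potS (cW w k.+1) = [:: k.+1]. Proof. by []. Qed.

Lemma hMS l r : delta inst cS l r -> oklS l -> False.
Proof. by move=> h; inversion h. Qed.

Lemma hlocS c t l r : ztb c -> all ztb t -> delta inst c l r -> oklS l ->
  exists T', [/\ oseq (den r) (thr t) = Some T', size T' <= 1, all (all ztb) T' &
                 emc emS l (tpot potS (c :: t)) (Tpot potS T')].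
Proof.
move=> hc ht hd; case: hd hc => //; intros; rewrite ?L1 ?L2 ?L3;
  (eexists; split; [reflexivity | exact: size_thrl | |]).
all: try (apply: all_thrl; exact: ht).
all: try by rewrite /= ht.
all: rewrite Tpot_thrl !tpot_cons.
all: try (match goal with H : is_true (inN inst ?k) |- _ => destruct k as [|k]; [by move: H|] end).
all: try by rewrite /emc /= ?eqxx ?subseq_refl.
all: rewrite emcN // potSW0 potSWS /=; exact: subseq_cons.
Qed.

Definition gmid (c : const) : bool :=
  match c with cG | cGv | cU _ | cV _ | cW _ _ => true | _ => false end.
Definition g0 (t : seq const) : bool := match t with [:: cC] => true | _ => all gmid t end.
Definition g1 (t : seq const) : bool :=
  match t with [:: cC] | [:: cI] | [:: cS] => true | _ => all gmid t end.

Lemma gmid_g0 t : all gmid t -> g0 t. Proof. by case: t => // [[]] // [] . Qed.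
Lemma gmid_g1 t : all gmid t -> g1 t. Proof. by case: t => // [[]] // [] . Qed.
Lemma g01 t : g0 t -> g1 t. Proof. by case: t => // [[]] // [] . Qed.

Lemma loc0 c t l r : g0 (c :: t) -> delta inst c l r -> l = tau ->
  exists R, oseq (den r) (thr t) = Some R /\ all g0 R.
Proof.
move=> hg hd; case: hd hg => //; intros; try discriminate; rewrite ?L1 ?L2 ?L3.
all: try (case: t hg => [|? ?] hg; [eexists; split; [reflexivity|by []] | by []]).
all: try (eexists; split; first reflexivity).
all: try (apply: all_thrl; apply: gmid_g0; by move: hg).
all: try (by move: hg => /= hg; rewrite ?andbT).
Qed.

Lemma loc1 c t l r : g1 (c :: t) -> delta inst c l r -> l = tau ->
  exists R, oseq (den r) (thr t) = Some R /\ all g1 R.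
Proof.
move=> hg hd; case: hd hg => //; intros; try discriminate; rewrite ?L1 ?L2 ?L3.
all: try (case: t hg => [|? ?] hg; [eexists; split; [reflexivity|by []] | by []]).
all: try (eexists; split; first reflexivity).
all: try (apply: all_thrl; apply: gmid_g1; by move: hg).
all: try (by move: hg => /= hg; rewrite ?andbT).
all: by case: t hg.
Qed.

Definition oklv (l : act Sigma) : bool := match l with lI | lS => true | _ => false end.

Lemma locv c t l r : g0 (c :: t) -> delta inst c l r -> oklv l ->
  exists R, oseq (den r) (thr t) = Some R /\ all g1 R.
Proof.
move=> hg hd; case: hd hg => //=; intros; rewrite ?L1 ?L2 ?L3.
all: try (case: t hg => [|? ?] hg; [eexists; split; [reflexivity|by []] | by []]).
Qed.

Lemma locZ c t l r : g1 (c :: t) -> delta inst c l r -> l = lZ -> False.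
Proof.
move=> hg hd; case: hd hg => //; intros; try discriminate.
Qed.

Lemma permS (x y : DD) : perm_eq x y -> perm_eq y x. Proof. by rewrite perm_sym. Qed.

Lemma oeq_some p' (X D1 : DD) : oeq (den p') (opar (Some X) (Some D1)) ->
  exists D', den p' = Some D' /\ perm_eq D' (X ++ D1).
Proof. by case: (den p') => //= D' h; exists D'. Qed.

Section Chain.
Variable body : seq const.
Hypothesis hbody : all gmid body.
Definition InvC (g : seq const -> bool) (D : DD) :=
  exists D0, all g D0 /\ (perm_eq D ((cZ :: body) :: D0) \/ perm_eq D D0).

Lemma stepC (g g' : seq const -> bool) l p p' D : (forall t, g t -> g' t) -> all g' (thrl body) ->
  (forall c t r, g (c :: t) -> delta inst c l r -> exists R, oseq (den r) (thr t) = Some R /\ all g' R) ->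
  l <> lZ -> step inst p l p' -> den p = Some D -> InvC g D -> exists D', den p' = Some D' /\ InvC g' D'.
Proof.
move=> hgg hb hloc hl hs hD [D0 [hg0 hor]].
have [c [t [D1 [r [hp hd ho]]]]] := step_den hs hD.
have wk : forall A, all g A -> all g' A by move=> A; apply: sub_all.
case: hor => hpD.
- case/perm2: (perm_trans (permS hpD) hp) => [[[ec et] hD01]|[C [h1 h2]]].
  + subst c t; inversion hd; subst => //.
    have [D' [E hD']] := oeq_some ho.
    exists D'; split => //; exists (thrl body ++ D1); split; last by right.
    by rewrite all_cat hb wk // -(perm_all _ hD01).
  + have := hg0; rewrite (perm_all _ h1) /= => /andP [hct hC].
    have [R [hR hgR]] := hloc _ _ _ hct hd.
    rewrite hR in ho; have [D' [E hD']] := oeq_some ho.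
    exists D'; split => //; exists (R ++ C); split.
      by rewrite all_cat hgR wk.
    left; apply: perm_trans hD' _; apply: perm_trans (_ : perm_eq _ (R ++ (cZ :: body) :: C)) _.
      by rewrite perm_cat2l.
    by rewrite -cat1s perm_catCA.
- have := hg0; rewrite (perm_all _ (perm_trans (permS hpD) hp)) /= => /andP [hct hC].
  have [R [hR hgR]] := hloc _ _ _ hct hd.
  rewrite hR in ho; have [D' [E hD']] := oeq_some ho.
  exists D'; split => //; exists (R ++ D1); split; last by right.
  by rewrite all_cat hgR wk.
Qed.

Lemma stepCZ p p' D : step inst p lZ p' -> den p = Some D -> InvC g1 D ->
  exists D' D1, den p' = Some D' /\ perm_eq D' (thrl body ++ D1).
Proof.
move=> hs hD [D0 [hg0 hor]].
have [c [t [D1 [r [hp hd ho]]]]] := step_den hs hD.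
case: hor => hpD.
- case/perm2: (perm_trans (permS hpD) hp) => [[[ec et] hD01]|[C [h1 h2]]].
  + subst c t; inversion hd; subst => //.
    have [D' [E hD']] := oeq_some ho.
    by exists D', D1.
  + have := hg0; rewrite (perm_all _ h1) /= => /andP [hct hC].
    by case: (locZ hct hd).
- have := hg0; rewrite (perm_all _ (perm_trans (permS hpD) hp)) /= => /andP [hct hC].
  by case: (locZ hct hd).
Qed.

Lemma tausC (g : seq const -> bool) p q D : all g (thrl body) ->
  (forall c t l r, g (c :: t) -> delta inst c l r -> l = tau ->
     exists R, oseq (den r) (thr t) = Some R /\ all g R) ->
  taus inst p q -> den p = Some D -> InvC g D -> exists D', den q = Some D' /\ InvC g D'.
Proof.
move=> hb hloc h; elim: h D => [p0|p0 q0 r0 hs _ IH] D hD hI; first by exists D.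
have [D' [hD' hI']] := stepC (fun t (x : g t) => x) hb (fun c t r hg hd => hloc c t _ r hg hd erefl)
  (fun e => match e with end) hs hD hI.
exact: IH hD' hI'.
Qed.

End Chain.

Definition uvb (c : const) : bool := match c with cU k | cV k => inN inst k | _ => false end.

Lemma inN_pos k : inN inst k -> 0 < k. Proof. by case/andP. Qed.

Lemma validWk k w0 w : inN inst k -> (w0 = uw inst k \/ w0 = vw inst k) -> suffix w w0 ->
  validW inst w k.
Proof.
move=> hk hw0 hs; rewrite /validW; have -> : (k == 0) = false by rewrite eqn0Ngt (inN_pos hk).
by split => //; case: hw0 => <-; rewrite hs ?orbT.
Qed.

Lemma validW0 k w0 w : inN inst k -> (w0 = uw inst k \/ w0 = vw inst k) -> suffix w w0 ->
  validW inst w 0.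
Proof. move=> hk hw0 hs; exists k; split => //; by case: hw0 => <-; rewrite hs ?orbT. Qed.

Lemma W_letters k w0 w : inN inst k -> (w0 = uw inst k \/ w0 = vw inst k) -> suffix w w0 ->
  wr (Con (cW w k)) (map aSym w) (Con (cW [::] k)).
Proof.
move=> hk hw0; elim: w => [|a w IH] hs /=; first exact: wr_nil.
apply: wr_vis (st_rule (dWa _)) (IH _) => //; first exact: validWk hw0 hs.
exact: suffix_trans (suffix_cons w a) hs.
Qed.

Lemma W_taus k w0 w : inN inst k -> (w0 = uw inst k \/ w0 = vw inst k) -> suffix w w0 ->
  wr (Con (cW w 0)) [::] (Con (cW [::] 0)).
Proof.
move=> hk hw0; elim: w => [|a w IH] hs /=; first exact: wr_nil.
apply: wr_tau (st_rule (dWt _)) (IH _); first exact: validW0 hw0 hs.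
exact: suffix_trans (suffix_cons w a) hs.
Qed.

Lemma unit_L c : uvb c -> wr (Con c) (map aSym (potL c)) Eps.
Proof.
have gen : forall k w0, inN inst k -> (w0 = uw inst k \/ w0 = vw inst k) ->
    wr (Con (cW w0 k)) (map aSym w0) Eps.
  move=> k w0 hk hw0; rewrite -[map _ _]cats0; apply: wr_cat (W_letters hk hw0 (suffix_refl _)) _.
  apply: wr_tau (st_rule (dWkt hk (validWk hk hw0 (suffix0s _)))) _.
  apply: wr_tau (st_rule (dWe (validW0 hk hw0 (suffix0s _)))) _; exact: wr_nil.
case: c => // k hk /=.
- apply: wr_tau (st_rule (dU hk)) _; apply: gen hk _; by left.
- apply: wr_tau (st_rule (dV hk)) _; apply: gen hk _; by right.
Qed.

Lemma unit_S c : uvb c -> wr (Con c) (map aIdx (potS c)) Eps.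
Proof.
have gen : forall k w0, inN inst k -> (w0 = uw inst k \/ w0 = vw inst k) ->
    wr (Con (cW w0 k)) [:: aIdx k] Eps.
  move=> k w0 hk hw0.
  apply: wr_vis (st_rule (dWk hk (validWk hk hw0 (suffix_refl _)))) _ => //.
  rewrite -[[::]]cats0; apply: wr_cat (W_taus hk hw0 (suffix_refl _)) _.
  apply: wr_tau (st_rule (dWe (validW0 hk hw0 (suffix0s _)))) _; exact: wr_nil.
case: c => // k hk /=.
- apply: wr_tau (st_rule (dU hk)) _; apply: gen hk _; by left.
- apply: wr_tau (st_rule (dV hk)) _; apply: gen hk _; by right.
Qed.

Lemma body_wtr (pf : const -> seq (act Sigma)) :
  (forall c, uvb c -> wr (Con c) (pf c) Eps) ->
  forall body X, all uvb body -> wtr (Par (tp body) X) (flatten (map pf body)).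
Proof.
move=> hu; elim => [|c b IH] X /=; first by move=> _; exists (Par Eps X); exact: wr_nil.
case/andP => hc hb.
have h1 : wr (Par (Seq (Con c) (tp b)) X) (pf c) (Par (Seq Eps (tp b)) X).
  apply: (wr_ctx (f := fun a => Par (Seq a (tp b)) X)) (hu _ hc).
  by move=> a l b' h; apply: st_parl; apply: st_seq.
have [q hq] : wtr (Par (Seq Eps (tp b)) X) (flatten (map pf b)).
  apply: wtr_scong (IH _ hb); apply: sc_par; [exact: sc_seq_epsl | exact: sc_refl].
exists q; exact: wr_cat h1 hq.
Qed.

Lemma pos_wtr (pf : const -> seq (act Sigma)) :
  (forall c, uvb c -> wr (Con c) (pf c) Eps) ->
  forall body d D' D1, all uvb body -> den d = Some D' -> perm_eq D' (thrl body ++ D1) ->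
  wtr d (flatten (map pf body)).
Proof.
move=> hu body d D' D1 hb hd hp.
case: body hb hp => [|c b] hb hp; first by exists d; exact: wr_nil.
apply: wtr_scong (sc_trans (den_complete hd) (canon_perm hp)) _.
exact: body_wtr.
Qed.

Lemma wstep_vis p l q : l <> tau -> wstep inst p l q ->
  exists p1 p2, [/\ taus inst p p1, step inst p1 l p2 & taus inst p2 q].
Proof. by case: l => //= *; match goal with H : exists _ _, _ |- _ => case: H => [a [b [? [? ?]]]] end; exists a, b. Qed.

Lemma taus_trans p q r : taus inst p q -> taus inst q r -> taus inst p r.
Proof. elim => // p0 q0 r0 hs _ IH h; exact: taus_step hs (IH h). Qed.

Lemma bisim_sym (B : proc -> proc -> Prop) : weak_bisimulation inst B ->
  weak_bisimulation inst (fun x y => B y x).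
Proof. move=> hB p q h; have [h1 h2] := hB _ _ h; by split. Qed.

Lemma all_flat (T : Type) (a : pred T) (pf : const -> seq T) (b : seq const) :
  (forall c, uvb c -> all a (pf c)) -> all uvb b -> all a (flatten (map pf b)).
Proof. by move=> h; elim: b => //= c b IH /andP[hc hb]; rewrite all_cat h // IH. Qed.

Lemma pmap_flat (Y : eqType) (em : act Sigma -> option Y) (pot : const -> seq Y)
  (pf : const -> seq (act Sigma)) (b : seq const) :
  (forall c, uvb c -> pmap em (pf c) = pot c) -> all uvb b ->
  pmap em (flatten (map pf b)) = tpot pot b.
Proof. by move=> h; elim: b => //= c b IH /andP[hc hb]; rewrite pmap_cat h // IH. Qed.

Lemma attack (Y : eqType) (cM : const) (lM : act Sigma) (pot : const -> seq Y)
  (okl : act Sigma -> bool) (em : act Sigma -> option Y) (pf : const -> seq (act Sigma))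
  (oktau : okl tau) (emtau : em tau = None) (hM : forall l r, delta inst cM l r -> okl l -> False)
  (hloc : forall c t l r, ztb c -> all ztb t -> delta inst c l r -> okl l ->
     exists T', [/\ oseq (den r) (thr t) = Some T', size T' <= 1, all (all ztb) T' &
                 emc em l (tpot pot (c :: t)) (Tpot pot T')])
  (hC : delta inst cC lM (Con cM)) (hlM : oklv lM)
  (hu : forall c, uvb c -> wr (Con c) (pf c) Eps)
  (hok : forall c, uvb c -> all okl (pf c))
  (hem : forall c, uvb c -> pmap em (pf c) = pot c)
  (hpotZ : pot cZ = [::]) (hokZ : okl lZ) (hemZ : em lZ = None)
  (B : proc -> proc -> Prop) (hB : weak_bisimulation inst B)
  (Yp Yp' Q : proc) (ba bd : seq const)
  (hBPQ : B (Par (Con cC) Yp) Q)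
  (hY : den Yp = Some [:: cZ :: ba]) (hYZ : step inst Yp lZ Yp')
  (hQ : den Q = Some [:: [:: cC]; cZ :: bd])
  (hba : all ztb ba) (hbd : all uvb bd) :
  subseq (tpot pot bd) (tpot pot ba).
Proof.
have lMt : lM <> tau by move=> e; rewrite e in hlM.
have lMZ : lM <> lZ by move=> e; rewrite e in hlM.
have lZt : (lZ : act Sigma) <> tau by [].
have hs1 : step inst (Par (Con cC) Yp) lM (Par (Con cM) Yp) by apply: st_parl; apply: st_rule.
have [h1 _] := hB _ _ hBPQ.
have [Q1 hw hb] := h1 _ _ hs1.
have hs2 : step inst (Par (Con cM) Yp) lZ (Par (Con cM) Yp') by apply: st_parr.
have [h1' _] := hB _ _ hb.
have [Q2 hw2 _] := h1' _ _ hs2.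
have [a [b [ta sb tb]]] := wstep_vis lMt hw.
have [c [d [tc sd _]]] := wstep_vis lZt hw2.
have hgm : all gmid bd by apply: sub_all hbd => -[].
have hb0 : all g0 (thrl bd) by apply: all_thrl; exact: gmid_g0.
have hb1 : all g1 (thrl bd) by apply: all_thrl; exact: gmid_g1.
have hI0 : InvC bd g0 [:: [:: cC]; cZ :: bd].
  exists [:: [:: cC]]; split => //; left.
  by rewrite -[[:: [:: cC]; cZ :: bd]]cat1s perm_catC.
have [Da [hDa hIa]] := tausC hb0 loc0 ta hQ hI0.
have [Db [hDb hIb]] := stepC g01 hb1 (fun c t r hg hd => locv hg hd hlM) lMZ sb hDa hIa.
have [Dc [hDc hIc]] := tausC hb1 loc1 (taus_trans tb tc) hDb hIb.
have [Dd [D1 [hDd hpd]]] := stepCZ sd hDc hIc.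
have [q hq] := pos_wtr hu hbd hDd hpd.
have hwr : wr Q1 (lZ :: flatten (map pf bd)) q := taus_wr tc (wr_vis lZt sd hq).
have [tr1 _] := bisim_transfer hB.
have [q' hq'] := tr1 _ _ _ hwr _ hb.
have hden : den (Par (Con cM) Yp) = Some ([:: cM] :: [:: cZ :: ba]) by rewrite /= hY.
have hIB : InvB cM [:: [:: cM]; cZ :: ba] [:: cZ :: ba].
  by split => //; rewrite /= hba andbT.
have := boundB oktau emtau hM hloc hq' _ hden hIB.
rewrite /= hokZ all_flat //= => /(_ isT).
rewrite hemZ (pmap_flat hem hbd) /Tpot /= tpot_cons hpotZ cats0 //.
Qed.

End Dev.

Lemma den_seq (Sigma : finType) (p q : proc Sigma) : den (Seq p q) = oseq (den p) (den q). Proof. by []. Qed.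
Lemma den_par (Sigma : finType) (p q : proc Sigma) : den (Par p q) = opar (den p) (den q). Proof. by []. Qed.

Lemma den_PV (Sigma : finType) ks : den (PV Sigma ks) = thr (map (@cV Sigma) ks).
Proof. elim: ks => // k ks IH; rewrite /PV /seqs /= -/(seqs _) -/(PV Sigma ks) IH; exact: (oseq_thr [:: cV Sigma k] _). Qed.
Lemma den_PU (Sigma : finType) ks : den (PU Sigma ks) = thr (map (@cU Sigma) ks).
Proof. elim: ks => // k ks IH; rewrite /PU /seqs /= -/(seqs _) -/(PU Sigma ks) IH; exact: (oseq_thr [:: cU Sigma k] _). Qed.

Lemma tpot_cat (Sigma : finType) (X : eqType) (pot : const Sigma -> seq X) a b :
  tpot pot (a ++ b) = tpot pot a ++ tpot pot b.
Proof. by rewrite /tpot map_cat flatten_cat. Qed.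

Theorem lemma8 (Sigma : finType) (inst : seq (seq Sigma * seq Sigma))
  (hSigma : 1 < #|Sigma|)
  (hnonempty : all (fun p => (p.1 != [::]) && (p.2 != [::])) inst)
  (v1 v2 u2 : seq nat)
  (hv1 : all (inN inst) v1) (hv2 : all (inN inst) v2) (hu2 : all (inN inst) u2)
  (hu2ne : u2 != [::]) :
  wbisim inst
    (Par (Con (cC Sigma)) (Seq (Con (cZ Sigma)) (PV Sigma v1)))
    (Par (Con (cC Sigma)) (Seq (Seq (Con (cZ Sigma)) (PV Sigma v2)) (PU Sigma u2))) ->
  pcp_solution inst.
Proof.
move=> [B [hB hBL]].
pose bL := map (@cV Sigma) v1.
pose bR := map (@cV Sigma) v2 ++ map (@cU Sigma) u2.
have hYL : den (Seq (Con (cZ Sigma)) (PV Sigma v1)) = Some [:: cZ Sigma :: bL].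
  by rewrite den_seq den_PV L2.
have hYR : den (Seq (Seq (Con (cZ Sigma)) (PV Sigma v2)) (PU Sigma u2)) = Some [:: cZ Sigma :: bR].
  by rewrite !den_seq den_PV den_PU L2 oseq_thr.
have hL0 : den (Par (Con (cC Sigma)) (Seq (Con (cZ Sigma)) (PV Sigma v1))) =
    Some [:: [:: cC Sigma]; cZ Sigma :: bL] by rewrite den_par hYL.
have hR0 : den (Par (Con (cC Sigma)) (Seq (Seq (Con (cZ Sigma)) (PV Sigma v2)) (PU Sigma u2))) =
    Some [:: [:: cC Sigma]; cZ Sigma :: bR] by rewrite den_par hYR.
have hYZL : step inst (Seq (Con (cZ Sigma)) (PV Sigma v1)) (lZ Sigma)
    (Seq (Eps Sigma) (PV Sigma v1)) by apply: st_seq; apply: st_rule; exact: dZ2.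
have hYZR : step inst (Seq (Seq (Con (cZ Sigma)) (PV Sigma v2)) (PU Sigma u2)) (lZ Sigma)
    (Seq (Seq (Eps Sigma) (PV Sigma v2)) (PU Sigma u2)) by apply: st_seq; apply: st_seq; apply: st_rule; exact: dZ2.
have zL : all (@ztb Sigma) bL by rewrite all_map; apply/allP.
have zR : all (@ztb Sigma) bR by rewrite all_cat !all_map; apply/andP; split; apply/allP.
have uL : all (uvb inst) bL by rewrite all_map.
have uR : all (uvb inst) bR by rewrite all_cat !all_map; apply/andP.
have hBs := bisim_sym hB.
have okL : forall c, uvb inst c -> all (oklI (Sigma:=Sigma)) (map (@aSym Sigma) (potL inst c)).
  by move=> c _; rewrite all_map; apply/allP.
have emL : forall c, uvb inst c -> pmap (emI (Sigma:=Sigma)) (map (@aSym Sigma) (potL inst c)) = potL inst c.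
  by move=> c _; elim: (potL inst c) => //= a w ->.
have okS : forall c, uvb inst c -> all (oklS (Sigma:=Sigma)) (map (@aIdx Sigma) (@potS Sigma c)).
  by move=> c _; rewrite all_map; apply/allP.
have emS' : forall c, uvb inst c -> pmap (emS (Sigma:=Sigma)) (map (@aIdx Sigma) (@potS Sigma c)) = potS c.
  by move=> c _; elim: (@potS Sigma c) => //= a w ->.
have A1 := @attack Sigma inst _ (cI Sigma) (lI Sigma) (potL inst) (@oklI Sigma) (@emI Sigma)
  (fun c => map (@aSym Sigma) (potL inst c)) isT erefl (@hMI Sigma inst) (@hlocI Sigma inst)
  (dC1 inst) isT (@unit_L Sigma inst) okL emL erefl isT erefl B hB _ _ _ bL bR hBL hYL hYZL hR0 zL uR.
have A2 := @attack Sigma inst _ (cS Sigma) (lS Sigma) (@potS Sigma) (@oklS Sigma) (@emS Sigma)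
  (fun c => map (@aIdx Sigma) (@potS Sigma c)) isT erefl (@hMS Sigma inst) (@hlocS Sigma inst)
  (dC2 inst) isT (@unit_S Sigma inst) okS emS' erefl isT erefl B hB _ _ _ bL bR hBL hYL hYZL hR0 zL uR.
have A3 := @attack Sigma inst _ (cI Sigma) (lI Sigma) (potL inst) (@oklI Sigma) (@emI Sigma)
  (fun c => map (@aSym Sigma) (potL inst c)) isT erefl (@hMI Sigma inst) (@hlocI Sigma inst)
  (dC1 inst) isT (@unit_L Sigma inst) okL emL erefl isT erefl _ hBs _ _ _ bR bL hBL hYR hYZR hL0 zR uL.
have A4 := @attack Sigma inst _ (cS Sigma) (lS Sigma) (@potS Sigma) (@oklS Sigma) (@emS Sigma)
  (fun c => map (@aIdx Sigma) (@potS Sigma c)) isT erefl (@hMS Sigma inst) (@hlocS Sigma inst)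
  (dC2 inst) isT (@unit_S Sigma inst) okS emS' erefl isT erefl _ hBs _ _ _ bR bL hBL hYR hYZR hL0 zR uL.
have eW := subseq_anti (introT andP (conj A1 A3)).
have eI := subseq_anti (introT andP (conj A2 A4)).
have tLV : forall ks, tpot (potL inst) (map (@cV Sigma) ks) = flatten (map (vw inst) ks).
  by elim => // k ks IH; rewrite tpot_cons IH.
have tLU : forall ks, tpot (potL inst) (map (@cU Sigma) ks) = flatten (map (uw inst) ks).
  by elim => // k ks IH; rewrite tpot_cons IH.
have tSV : forall ks, tpot (@potS Sigma) (map (@cV Sigma) ks) = ks by elim => // k ks IH; rewrite tpot_cons IH.
have tSU : forall ks, tpot (@potS Sigma) (map (@cU Sigma) ks) = ks by elim => // k ks IH; rewrite tpot_cons IH.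
rewrite /bR /bL tpot_cat tSV tSU tSV in eI.
rewrite /bR /bL tpot_cat tLV tLU tLV -eI map_cat flatten_cat in eW.
exists u2; split => //; split => //.
by move/eqP: eW; rewrite eqseq_cat // => /andP[_ /eqP].
Qed.
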